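(* Let $L$ be a finite-dimensional Lie algebra over a field $F$ and let $Q$ be a strong quasi-ideal of $L$. Then either $Q$ is a strong ideal of $L$, or $L$ is almost abelian, or $F$ has characteristic two and there is an isomorphism $L\cong K$ carrying $Q$ onto $Fc$.
   Context: $K$ denotes the three-dimensional Lie algebra with basis $a,b,c$ and products $[a,b]=c$, $[b,c]=b$, $[a,c]=a$. A subalgebra $Q$ is a quasi-ideal of $L$ if $[Q,V]\subseteq Q+V$ for every subspace $V$ of $L$. A subalgebra $U$ of $L$ is a strong ideal (respectively strong quasi-ideal) of $L$ if every one-dimensional subalgebra of $U$ is an ideal (respectively quasi-ideal) of $L$. $L$ is almost abelian if $L=L^2\oplus Fx$ for some $x$, where $L^2=[L,L]$ is abelian and $\mathrm{ad}\,x$ acts as the identity map on $L^2$. *)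

(* Defs.v *)
(* Finite-dimensional Lie algebras over a field F are modelled
   as a vectType F (finite dimensional F-vector space) with a bracket. *)
From HB Require Import structures.
From mathcomp Require Import all_boot all_order all_algebra.
Set Implicit Arguments. Unset Strict Implicit. Unset Printing Implicit Defensive.
Import GRing.Theory.
Local Open Scope ring_scope.

Definition is_lie_bracket (F : fieldType) (V : vectType F) (br : V -> V -> V) : Prop :=
  [/\ (forall (k : F) (x y z : V), br (k *: x + y) z = k *: br x z + br y z),
      (forall (k : F) (x y z : V), br x (k *: y + z) = k *: br x y + br x z),
      (forall x : V, br x x = 0)
    & (forall x y z : V, br x (br y z) + br y (br z x) + br z (br x y) = 0)].

Definition lie_brs (F : fieldType) (V : vectType F) (br : V -> V -> V)
    (U W : {vspace V}) : {vspace V} :=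
  <<[seq br u w | u <- vbasis U, w <- vbasis W]>>%VS.

Definition is_subalg (F : fieldType) (V : vectType F) (br : V -> V -> V)
    (U : {vspace V}) : Prop := (lie_brs br U U <= U)%VS.

Definition is_ideal (F : fieldType) (V : vectType F) (br : V -> V -> V)
    (U : {vspace V}) : Prop := (lie_brs br fullv U <= U)%VS.

Definition is_quasi_ideal (F : fieldType) (V : vectType F) (br : V -> V -> V)
    (Q : {vspace V}) : Prop :=
  is_subalg br Q /\ forall W : {vspace V}, (lie_brs br Q W <= Q + W)%VS.

Definition is_strong_ideal (F : fieldType) (V : vectType F) (br : V -> V -> V)
    (U : {vspace V}) : Prop :=
  is_subalg br U /\
  forall W : {vspace V}, (W <= U)%VS -> \dim W = 1%N -> is_subalg br W -> is_ideal br W.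

Definition is_strong_quasi_ideal (F : fieldType) (V : vectType F) (br : V -> V -> V)
    (U : {vspace V}) : Prop :=
  is_subalg br U /\
  forall W : {vspace V}, (W <= U)%VS -> \dim W = 1%N -> is_subalg br W -> is_quasi_ideal br W.

Definition almost_abelian (F : fieldType) (V : vectType F) (br : V -> V -> V) : Prop :=
  let L2 := lie_brs br fullv fullv in
  exists x : V,
    [/\ x != 0, (L2 + <[x]>)%VS = fullv, directv (L2 + <[x]>),
        lie_brs br L2 L2 = 0%VS
      & forall y, y \in L2 -> br x y = y].

(* The algebra K on F^3 with basis a = e0, b = e1, c = e2 and
   [a,b] = c, [b,c] = b, [a,c] = a (extended bilinearly, alternating). *)
Definition Ka (F : fieldType) : 'rV[F]_3 := delta_mx 0 (inord 0).
Definition Kb (F : fieldType) : 'rV[F]_3 := delta_mx 0 (inord 1).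
Definition Kc (F : fieldType) : 'rV[F]_3 := delta_mx 0 (inord 2).

Definition K_br (F : fieldType) (x y : 'rV[F]_3) : 'rV[F]_3 :=
  let x1 := x 0 (inord 0) in let x2 := x 0 (inord 1) in let x3 := x 0 (inord 2) in
  let y1 := y 0 (inord 0) in let y2 := y 0 (inord 1) in let y3 := y 0 (inord 2) in
  (x1 * y2 - x2 * y1) *: Kc F + (x2 * y3 - x3 * y2) *: Kb F
  + (x1 * y3 - x3 * y1) *: Ka F.

(* Main.v *)
Require Import Defs.
From HB Require Import structures.
From mathcomp Require Import all_boot all_order all_algebra.
From Stdlib Require Import Ring.
Import GRing.Theory.
Local Open Scope ring_scope.
Set Implicit Arguments. Unset Strict Implicit. Unset Printing Implicit Defensive.

Definition RR (F : fieldType) (V : lmodType F) := (GRing.Field.sort F * GRing.Lmodule.sort V)%type.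
Section RRdefs.
Variables (F : fieldType) (V : lmodType F).
Definition radd (p q : RR V) : RR V := (p.1 + q.1, p.2 + q.2).
Definition rmul (p q : RR V) : RR V := (p.1 * q.1, p.1 *: q.2 + q.1 *: p.2).
Definition ropp (p : RR V) : RR V := (- p.1, - p.2).
Definition rzero : RR V := (0, 0).
Definition rone : RR V := (1, 0).
Definition embV (v : V) : RR V := (0, v).
Definition embS (a : F) : RR V := (a, 0).

Lemma RRth : @ring_theory (RR V) rzero rone radd rmul (fun p q => radd p (ropp q)) ropp eq.
Proof.
constructor.
- by case=> a v; rewrite /radd /= add0r add0r.
- by case=> a v [b w]; rewrite /radd /= addrC [v + _]addrC.
- by case=> a v [b w] [c z]; rewrite /radd /= !addrA.
- by case=> a v; rewrite /rmul /= mul1r scale1r scaler0 addr0.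
- by case=> a v [b w]; rewrite /rmul /= mulrC addrC.
- case=> a v [b w] [c z]; rewrite /rmul /= mulrA; congr (_, _).
  by rewrite !scalerDr !scalerA addrA [c * a]mulrC [c * b]mulrC.
- case=> a v [b w] [c z]; rewrite /rmul /radd /= mulrDl; congr (_, _).
  by rewrite scalerDl scalerDr addrACA.
- by [].
- by case=> a v; rewrite /radd /ropp /= !subrr.
Qed.

Lemma embVD u v : embV (u + v) = radd (embV u) (embV v).
Proof. by rewrite /radd /= addr0. Qed.
Lemma embVN u : embV (- u) = ropp (embV u).
Proof. by rewrite /ropp /= oppr0. Qed.
Lemma embVZ a u : embV (a *: u) = rmul (embS a) (embV u).
Proof. by rewrite /rmul /= mulr0 scale0r addr0. Qed.
Lemma embV0 : embV 0 = rzero. Proof. by []. Qed.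
Lemma embSD a b : embS (a + b) = radd (embS a) (embS b).
Proof. by rewrite /radd /= addr0. Qed.
Lemma embSN a : embS (- a) = ropp (embS a).
Proof. by rewrite /ropp /= oppr0. Qed.
Lemma embSM a b : embS (a * b) = rmul (embS a) (embS b).
Proof. by rewrite /rmul /= !scaler0 addr0. Qed.
Lemma embS0 : embS 0 = rzero. Proof. by []. Qed.
Lemma embS1 : embS 1 = rone. Proof. by []. Qed.
Lemma embV_inj u v : embV u = embV v -> u = v.
Proof. by move=> /(congr1 snd). Qed.
Lemma embS_inj a b : embS a = embS b -> a = b.
Proof. by move=> /(congr1 fst). Qed.
End RRdefs.

Ltac lring F V :=
  first [ apply: (@embV_inj F V) | apply: (@embS_inj F V) ];
  rewrite ?(@embVD F V, @embVN F V, @embVZ F V, @embV0 F V, @embSD F V, @embSN F V, @embSM F V, @embS0 F V, @embS1 F V);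
  ring.


Section Basic.
Variables (F : fieldType) (V : vectType F) (br : V -> V -> V).
Hypothesis hL : is_lie_bracket br.

Lemma br0l z : br 0 z = 0.
Proof.
case: hL => H1 _ _ _; have := H1 1 0 0 z.
by rewrite !scale1r addr0 -{1}[br 0 z]addr0 => /addrI <-.
Qed.
Lemma br0r z : br z 0 = 0.
Proof.
case: hL => _ H1 _ _; have := H1 1 z 0 0.
by rewrite !scale1r addr0 -{1}[br z 0]addr0 => /addrI <-.
Qed.
Lemma brDl x y z : br (x + y) z = br x z + br y z.
Proof. by case: hL => H _ _ _; have := H 1 x y z; rewrite !scale1r. Qed.
Lemma brDr x y z : br z (x + y) = br z x + br z y.
Proof. by case: hL => _ H _ _; have := H 1 z x y; rewrite !scale1r. Qed.
Lemma brZl k x z : br (k *: x) z = k *: br x z.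
Proof. by case: hL => H _ _ _; have := H k x 0 z; rewrite !addr0 br0l addr0. Qed.
Lemma brZr k x z : br z (k *: x) = k *: br z x.
Proof. by case: hL => _ H _ _; have := H k z x 0; rewrite !addr0 br0r addr0. Qed.
Lemma brxx x : br x x = 0.
Proof. by case: hL. Qed.
Lemma brC x y : br y x = - br x y.
Proof.
apply/eqP; rewrite -addr_eq0; have := brxx (x + y).
by rewrite brDl !brDr !brxx add0r addr0 addrC => ->.
Qed.
Lemma brNl x z : br (- x) z = - br x z.
Proof. by rewrite -scaleN1r brZl scaleN1r. Qed.
Lemma brNr x z : br z (- x) = - br z x.
Proof. by rewrite -scaleN1r brZr scaleN1r. Qed.
Lemma brBl x y z : br (x - y) z = br x z - br y z.
Proof. by rewrite brDl brNl. Qed.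
Lemma brBr x y z : br z (x - y) = br z x - br z y.
Proof. by rewrite brDr brNr. Qed.
Lemma jacobi x y z : br x (br y z) + br y (br z x) + br z (br x y) = 0.
Proof. by case: hL. Qed.

Lemma br_suml I (r : seq I) (P : pred I) (G : I -> V) z :
  br (\sum_(i <- r | P i) G i) z = \sum_(i <- r | P i) br (G i) z.
Proof. by apply: (big_morph (fun x => br x z)); [exact: (fun x y => brDl x y z) | exact: br0l]. Qed.
Lemma br_sumr I (r : seq I) (P : pred I) (G : I -> V) z :
  br z (\sum_(i <- r | P i) G i) = \sum_(i <- r | P i) br z (G i).
Proof. by apply: (big_morph (fun x => br z x)); [exact: (fun x y => brDr x y z) | exact: br0r]. Qed.

Lemma span_ind (P : V -> Prop) (X : seq V) :
  P 0 -> (forall u v, P u -> P v -> P (u + v)) -> (forall k v, P v -> P (k *: v)) ->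
  (forall v, v \in X -> P v) -> forall v, v \in <<X>>%VS -> P v.
Proof.
move=> P0 PD PZ PX v /(@coord_span _ _ _ (in_tuple X)) ->.
elim/big_ind: _ => // i _; apply: PZ; apply: PX; exact: mem_nth.
Qed.

Lemma lie_brs_ind (P : V -> Prop) (U W : {vspace V}) :
  P 0 -> (forall u v, P u -> P v -> P (u + v)) -> (forall k v, P v -> P (k *: v)) ->
  (forall u w, u \in U -> w \in W -> P (br u w)) ->
  forall v, v \in lie_brs br U W -> P v.
Proof.
move=> P0 PD PZ Pb; apply: span_ind => // v /allpairsP [[u w] [/= Hu Hw ->]].
by apply: Pb; apply: vbasis_mem.
Qed.

Lemma lie_brs_mem (U W : {vspace V}) u w : u \in U -> w \in W -> br u w \in lie_brs br U W.
Proof.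
move=> /coord_vbasis -> /coord_vbasis ->.
rewrite br_suml; apply: rpred_sum => i _; rewrite brZl br_sumr; apply: rpredZ.
apply: rpred_sum => j _; rewrite brZr; apply: rpredZ; apply: memv_span.
by apply/allpairsP; exists ((vbasis U)`_i, (vbasis W)`_j); rewrite !mem_nth ?size_tuple.
Qed.

Lemma lie_brs_subP (U W S : {vspace V}) :
  reflect (forall u w, u \in U -> w \in W -> br u w \in S) (lie_brs br U W <= S)%VS.
Proof.
apply: (iffP idP) => [H u w Hu Hw | H].
  by apply: (subvP H); apply: lie_brs_mem.
apply/subvP; apply: lie_brs_ind => //; [exact: mem0v| exact: memvD | exact: memvZ].
Qed.

End Basic.


Lemma sum3 (M : zmodType) (G : 'I_3 -> M) : \sum_i G i = G (inord 0) + G (inord 1) + G (inord 2).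
Proof.
rewrite !big_ord_recr big_ord0 /= GRing.add0r.
by congr (_ + _ + _); congr G; apply: val_inj; rewrite /= inordK.
Qed.
Lemma ord3 (i : 'I_3) : [\/ i = inord 0, i = inord 1 | i = inord 2].
Proof.
case: i => [[|[|[|n]]] Hi] //; [apply: Or31 | apply: Or32 | apply: Or33];
  by apply: val_inj; rewrite /= inordK.
Qed.
Lemma inord_eq (m n : nat) : (m < 3)%N -> (n < 3)%N -> (inord m == inord n :> 'I_3) = (m == n).
Proof. by move=> Hm Hn; rewrite -val_eqE /= !inordK. Qed.

Definition coordrow (F : fieldType) (V : vectType F) (X : 3.-tuple V) (y : V) : 'rV[F]_3 :=
  \row_i coord X i y.
Lemma coordrow_lin (F : fieldType) (V : vectType F) (X : 3.-tuple V) : linear (coordrow X).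
Proof. by move=> a u v; apply/rowP => i; rewrite !mxE linearP. Qed.
HB.instance Definition _ (F : fieldType) (V : vectType F) (X : 3.-tuple V) :=
  GRing.isSemilinear.Build F V 'rV[F]_3 _ (coordrow X) (GRing.semilinear_linear (coordrow_lin X)).

Section Main.
Variables (F : fieldType) (V : vectType F) (br : V -> V -> V).
Hypothesis hL : is_lie_bracket br.
Variables (x : V) (l : F).
Hypothesis Hx0 : x != 0.
Hypothesis Hl0 : l != 0.
Hypothesis Hq : forall y, br x y \in (<[x]> + <[y]>)%VS.
Add Ring RRm : (@RRth F V).

Lemma mem_add_line (a b v : V) : v \in (<[a]> + <[b]>)%VS ->
  exists p q, v = p *: a + q *: b.
Proof.
by case/memv_addP => u /vlineP [p ->] [w /vlineP [q ->] ->]; exists p, q.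
Qed.

Definition D y := br x y - l *: y.

Lemma D_lin a u v : D (a *: u + v) = a *: D u + D v.
Proof.
rewrite /D (brDr hL) (brZr hL) scalerDr scalerA mulrC -scalerA.
by rewrite scalerBr opprD addrACA.
Qed.
Lemma D0 : D 0 = 0.
Proof. by rewrite /D (br0r hL) scaler0 subrr. Qed.
Lemma DZ a u : D (a *: u) = a *: D u.
Proof. by rewrite -[a *: u]addr0 D_lin D0 addr0. Qed.
Lemma DD u v : D (u + v) = D u + D v.
Proof. by rewrite -[u]scale1r D_lin !scale1r. Qed.
Lemma Dx : D x \in <[x]>%VS.
Proof. by rewrite /D (brxx hL) sub0r memvN ; apply/memvZ/memv_line. Qed.

Lemma D_all y0 s0 : br x y0 = l *: y0 + s0 *: x -> y0 \notin <[x]>%VS ->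
  forall y, D y \in <[x]>%VS.
Proof.
move=> Hy0 Hy0x.
have Dy0 : D y0 \in <[x]>%VS by rewrite /D Hy0 addrC addKr ; apply/memvZ/memv_line.
have span_ok : forall y, y \in (<[x]> + <[y0]>)%VS -> D y \in <[x]>%VS.
  move=> y /mem_add_line [p [q ->]].
  rewrite DD !DZ; apply: memvD; apply: memvZ; [exact: Dx | exact: Dy0].
move=> y.
have /mem_add_line [a [t Ht]] := Hq y.
have Ey : D y - (t - l) *: y \in <[x]>%VS.
  by rewrite /D Ht scalerBl opprB addrA subrK addrK; apply/memvZ/memv_line.
have /mem_add_line [a' [t' Ht']] := Hq (y + y0).
have Ey' : D (y + y0) - (t' - l) *: (y + y0) \in <[x]>%VS.
  by rewrite /D Ht' scalerBl opprB addrA subrK addrK; apply/memvZ/memv_line.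
set u := t - l in Ey; set w := t' - l in Ey'.
have key : (u - w) *: y - w *: y0 \in <[x]>%VS.
  suff -> : (u - w) *: y - w *: y0 = D (y + y0) - w *: (y + y0) - (D y - u *: y) - D y0.
    by apply: memvB => //; apply: memvB.
  rewrite DD; lring F V.
have [u0|unz] := eqVneq u 0.
  by move: Ey; rewrite u0 scale0r subr0.
have [uw|unw] := eqVneq u w.
  move: key; rewrite uw subrr scale0r sub0r memvN => Hw.
  have wnz : w != 0 by rewrite -uw.
  by move: Hy0x; rewrite -(scalerK wnz y0) memvZ.
apply: span_ok.
have unw' : u - w != 0 by rewrite subr_eq0.
have -> : y = (u - w)^-1 *: ((u - w) *: y - w *: y0) + ((u - w)^-1 * w) *: y0.
  by rewrite scalerBr scalerA mulVf // scale1r -scalerA subrK.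
by apply: memv_add; [apply: memvZ | apply: memvZ; apply: memv_line].
Qed.

Hypothesis HD : forall y, D y \in <[x]>%VS.

Definition Ev v := br x v = l *: v.
Lemma ev0 : Ev 0.
Proof. by rewrite /Ev (br0r hL) scaler0. Qed.
Lemma evD u v : Ev u -> Ev v -> Ev (u + v).
Proof. by rewrite /Ev (brDr hL) scalerDr => -> ->. Qed.
Lemma evZ a u : Ev u -> Ev (a *: u).
Proof. by rewrite /Ev (brZr hL) => ->; rewrite !scalerA mulrC. Qed.
Lemma evN u : Ev u -> Ev (- u).
Proof. by move=> /(evZ (-1)); rewrite scaleN1r. Qed.
Lemma ev_x a : Ev (a *: x) -> a = 0.
Proof.
rewrite /Ev (brZr hL) (brxx hL) scaler0 scalerA => /esym /eqP.
by rewrite scaler_eq0 mulf_eq0 (negPf Hl0) (negPf Hx0) /= orbF => /eqP.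
Qed.
Lemma ev_notx : ~ Ev x.
Proof. by rewrite -[x]scale1r => /ev_x /eqP; rewrite oner_eq0. Qed.

Lemma ev_dec y : exists s e, Ev e /\ y = e + s *: x.
Proof.
have /vlineP [c Hc] := HD y.
have Hb : br x y = c *: x + l *: y by rewrite -Hc /D subrK.
exists (- (c / l)), (y + (c / l) *: x); split; last by lring F V.
rewrite /Ev (brDr hL) (brZr hL) (brxx hL) scaler0 addr0 Hb scalerDr scalerA.
by rewrite mulrCA divff // mulr1 addrC.
Qed.

Lemma ev_br h k : Ev h -> Ev k -> exists mu, br h k = mu *: x /\ mu + mu = 0.
Proof.
move=> Eh Ek.
have J := jacobi hL x h k.
rewrite (brC hL x k) Ek (brNr hL) Eh !(brZr hL) (brC hL h k) in J.
have HB : br x (br h k) = l *: br h k + l *: br h k.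
  by apply/eqP; rewrite -subr_eq0; apply/eqP; rewrite -J; lring F V.
have [s [e [Ee He]]] := ev_dec (br h k).
have He0 : e = (- (s + s)) *: x.
  move: HB; rewrite He (brDr hL) (brZr hL) (brxx hL) scaler0 addr0 Ee => HB.
  apply: (scalerI Hl0).
  have H0 : l *: e - (l *: (e + s *: x) + l *: (e + s *: x)) = 0 by rewrite {1}HB subrr.
  by apply/eqP; rewrite -subr_eq0; apply/eqP; rewrite -[RHS]oppr0 -H0; lring F V.
have := Ee; rewrite He0 => /ev_x /eqP; rewrite oppr_eq0 => /eqP ss0.
exists s; split => //.
by rewrite He He0 ss0 oppr0 scale0r add0r.
Qed.

Ltac evt := repeat first [ apply: evD | apply: evZ | apply: evN | apply: ev0 | assumption ].

Lemma case_ab : (forall h k, Ev h -> Ev k -> br h k = 0) -> almost_abelian br.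
Proof.
move=> Hab; rewrite /almost_abelian.
set L2 := lie_brs br fullv fullv.
have L2ev : forall v, v \in L2 -> Ev v.
  move=> v Hv; apply: (lie_brs_ind _ _ _ _ Hv); [exact: ev0 | exact: evD | exact: evZ | ].
  move=> u w _ _.
  have [s1 [e1 [E1 ->]]] := ev_dec u.
  have [s2 [e2 [E2 ->]]] := ev_dec w.
  rewrite !(brDl hL, brDr hL, brZl hL, brZr hL) (Hab _ _ E1 E2) (brxx hL) (brC hL x e1) E1 E2.
  evt.
have linv : l^-1 != 0 by rewrite invr_eq0.
exists (l^-1 *: x); split.
- by rewrite scaler_eq0 negb_or linv.
- apply/eqP; rewrite eqEsubv subvf /=; apply/subvP => y _.
  have [s [e [Ee ->]]] := ev_dec y.
  apply: memv_add.
    have -> : e = l^-1 *: br x e by rewrite Ee scalerA mulVf // scale1r.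
    by apply: memvZ; apply: (lie_brs_mem hL); apply: memvf.
  have -> : s *: x = (s * l) *: (l^-1 *: x) by rewrite scalerA -mulrA mulfV // mulr1.
  by apply: memvZ; apply: memv_line.
- apply/directv_addP/eqP; rewrite -subv0; apply/subvP => v /memv_capP [Hv1 /vlineP [a Ha]].
  have := L2ev _ Hv1; rewrite Ha scalerA => /ev_x /eqP.
  by rewrite mulf_eq0 (negPf linv) orbF => /eqP a0; rewrite a0 mul0r scale0r mem0v.
- apply/eqP; rewrite -subv0; apply/(lie_brs_subP hL) => u w Hu Hw.
  by rewrite (Hab _ _ (L2ev _ Hu) (L2ev _ Hw)) mem0v.
- by move=> y /L2ev Ey; rewrite (brZl hL) Ey scalerA mulVf // scale1r.
Qed.

Lemma ev_cx e : Ev e -> br (l^-1 *: x) e = e.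
Proof. by move=> Ee; rewrite (brZl hL) Ee scalerA mulVf // scale1r. Qed.

Lemma no_x e v : Ev e -> Ev v -> x \notin (<[e]> + <[v]>)%VS.
Proof.
move=> Ee Ev'; apply/negP => /mem_add_line [p [q Hx]]; apply: ev_notx; rewrite Hx; evt.
Qed.

Variables (h k : V) (mu : F).
Hypotheses (Eh : Ev h) (Ek : Ev k) (Hhk : br h k = mu *: x) (Hmu : mu != 0)
  (Hmu2 : mu + mu = 0).

Lemma two0 : (1 + 1 : F) = 0.
Proof.
apply/eqP; have : (1 + 1) * mu == 0 by rewrite mulrDl mul1r Hmu2.
by rewrite mulf_eq0 (negPf Hmu) orbF.
Qed.
Lemma vN (v : V) : - v = v.
Proof.
have : (1 + 1) *: v = 0 by rewrite two0 scale0r.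
by rewrite scalerDl scale1r => H; apply: (addIr v); rewrite addNr H.
Qed.
Lemma pchar2 : 2%N \in [pchar F].
Proof. by rewrite inE /= -addn1 natrD two0 eqxx. Qed.

Lemma ev_span e : Ev e -> exists a b, e = a *: h + b *: k.
Proof.
move=> Ee.
have [n1 [Hn1 _]] := ev_br Ek Ee.
have [n2 [Hn2 _]] := ev_br Ee Eh.
have J := jacobi hL e h k.
rewrite Hhk Hn1 Hn2 !(brZr hL) (brC hL x e) (brC hL x h) (brC hL x k) Ee Eh Ek in J.
have S0 : mu *: e + n1 *: h + n2 *: k = 0.
  apply: (scalerI Hl0); rewrite scaler0 -oppr0 -J; lring F V.
exists (- (n1 / mu)), (- (n2 / mu)).
rewrite -(scalerK Hmu e).
have -> : mu *: e = - (n1 *: h + n2 *: k).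
  by apply/eqP; rewrite -subr_eq0 opprK addrA S0.
lring F V.
Qed.

Lemma h0 : h != 0.
Proof.
apply/negP => /eqP h0; move: Hhk; rewrite h0 (br0l hL) => /esym/eqP.
by rewrite scaler_eq0 (negPf Hmu) (negPf Hx0).
Qed.

Variable Q : {vspace V}.
Hypotheses (HxQ : x \in Q) (HQs : is_subalg br Q)
  (HQq : forall W, (W <= Q)%VS -> \dim W = 1%N -> is_subalg br W -> is_quasi_ideal br W).

Lemma Q_line : Q = <[x]>%VS.
Proof.
apply/eqP; rewrite eqEsubv -memvE HxQ andbT; apply/subvP => q HqQ.
have [s [e [Ee He]]] := ev_dec q.
have HeQ : e \in Q.
  have : br x q \in Q by apply: (subvP HQs); apply: (lie_brs_mem hL).
  rewrite He (brDr hL) (brZr hL) (brxx hL) scaler0 addr0 Ee.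
  by move=> H; rewrite -(scalerK Hl0 e); apply: memvZ.
suff e0 : e = 0 by rewrite He e0 add0r memvZ // memv_line.
have [//|enz] := eqVneq e 0; exfalso.
have qi : is_quasi_ideal br <[e]>.
  apply: HQq; first by rewrite -memvE.
    by rewrite dim_vline enz.
  apply/(lie_brs_subP hL) => u w /vlineP [a ->] /vlineP [b ->].
  by rewrite (brZl hL) (brZr hL) (brxx hL) !scaler0 mem0v.
have qiv : forall v, br e v \in (<[e]> + <[v]>)%VS.
  move=> v; case: qi => _ /(_ <[v]>%VS) /(lie_brs_subP hL); apply; exact: memv_line.
have [a [b Hab]] := ev_span Ee.
have xin : forall v c, Ev v -> c != 0 -> br e v = c *: x -> False.
  move=> v c Evv cnz Hc; apply: (negP (no_x Ee Evv)).
  by rewrite -(scalerK cnz x) memvZ // -Hc.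
have [b0|bnz] := eqVneq b 0.
  have anz : a != 0.
    by apply/negP => /eqP a0; move: enz; rewrite Hab a0 b0 !scale0r addr0 eqxx.
  apply: (xin k (a * mu) Ek); first by rewrite mulf_neq0.
  by rewrite Hab b0 scale0r addr0 (brZl hL) Hhk scalerA.
apply: (xin h (- (b * mu)) Eh); first by rewrite oppr_eq0 mulf_neq0.
by rewrite Hab (brDl hL) !(brZl hL) (brxx hL) scaler0 add0r (brC hL h k) Hhk scalerN scalerA scaleNr.
Qed.

Definition c0 := l^-1 *: x.
Definition a0 := (mu^-1 * l^-1) *: h.
Definition b0 := k.
Lemma Ea0 : Ev a0. Proof. exact: evZ. Qed.
Lemma c0nz : c0 != 0. Proof. by rewrite scaler_eq0 invr_eq0 negb_or Hl0. Qed.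
Lemma a0nz : a0 != 0.
Proof. by rewrite scaler_eq0 mulf_eq0 !invr_eq0 negb_or negb_or Hl0 Hmu h0. Qed.
Lemma tab_ab : br a0 b0 = c0.
Proof. by rewrite (brZl hL) Hhk scalerA mulrAC mulVf // mul1r. Qed.
Lemma tab_ba : br b0 a0 = - c0.
Proof. by rewrite (brC hL a0 b0) tab_ab. Qed.
Lemma tab_ca : br c0 a0 = - a0.
Proof. by rewrite ev_cx ?vN //; exact: Ea0. Qed.
Lemma tab_ac : br a0 c0 = a0.
Proof. by rewrite (brC hL c0 a0) tab_ca opprK. Qed.
Lemma tab_cb : br c0 b0 = - b0.
Proof. by rewrite ev_cx ?vN. Qed.
Lemma tab_bc : br b0 c0 = b0.
Proof. by rewrite (brC hL c0 b0) tab_cb opprK. Qed.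

Lemma br_comb_gen (A B C : V) :
  br A B = C -> br B A = - C -> br C A = - A -> br A C = A -> br C B = - B -> br B C = B ->
  forall p0 p1 p2 q0 q1 q2,
  br (p0 *: A + p1 *: B + p2 *: C) (q0 *: A + q1 *: B + q2 *: C) =
  (p0 * q2 - p2 * q0) *: A + (p1 * q2 - p2 * q1) *: B + (p0 * q1 - p1 * q0) *: C.
Proof.
move=> t1 t2 t3 t4 t5 t6 p0 p1 p2 q0 q1 q2.
rewrite !(brDl hL, brDr hL, brZl hL, brZr hL) !(brxx hL).
rewrite t1 t2 t3 t4 t5 t6.
lring F V.
Qed.

Lemma spanX y : y \in <<[:: a0; b0; c0]>>%VS.
Proof.
have [s [e [Ee ->]]] := ev_dec y.
have [a [b ->]] := ev_span Ee.
have Ha : h = (l * mu) *: a0.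
  by rewrite /a0 scalerA -mulrA (mulrA mu) mulfV // mul1r mulfV // scale1r.
have Hc : x = l *: c0 by rewrite /c0 scalerA mulfV // scale1r.
have ma : a0 \in <<[:: a0; b0; c0]>>%VS by apply: memv_span; rewrite !inE eqxx.
have mb : b0 \in <<[:: a0; b0; c0]>>%VS by apply: memv_span; rewrite !inE eqxx orbT.
have mc : c0 \in <<[:: a0; b0; c0]>>%VS by apply: memv_span; rewrite !inE eqxx !orbT.
rewrite Ha Hc.
by apply: memvD; [apply: memvD|]; apply: memvZ => //; apply: memvZ.
Qed.

Section Iso.
Variables A B C : V.
Hypotheses (EA : Ev A) (EB : Ev B) (Anz : A != 0) (Cnz : C != 0)
  (t1 : br A B = C) (t2 : br B A = - C) (t3 : br C A = - A) (t4 : br A C = A)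
  (t5 : br C B = - B) (t6 : br B C = B) (HCv : forall v, Ev v -> br C v = v)
  (Hspan : forall y, y \in <<[:: A; B; C]>>%VS).

Definition X3 : 3.-tuple V := [tuple A; B; C].
Lemma nthX0 : X3`_(@inord 2 0) = A. Proof. by rewrite inordK. Qed.
Lemma nthX1 : X3`_(@inord 2 1) = B. Proof. by rewrite inordK. Qed.
Lemma nthX2 : X3`_(@inord 2 2) = C. Proof. by rewrite inordK. Qed.

Lemma freeX : free X3.
Proof.
apply/freeP => kk; rewrite sum3 nthX0 nthX1 nthX2 => H.
have H1 : kk (inord 0) *: A + kk (inord 1) *: B = 0.
  have := congr1 (br C) H; rewrite (br0r hL) !(brDr hL) !(brZr hL) (brxx hL) scaler0 addr0.
  by rewrite !HCv.
have k2 : kk (inord 2) = 0.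
  by move: H; rewrite H1 add0r => /eqP; rewrite scaler_eq0 (negPf Cnz) orbF => /eqP.
have k1 : kk (inord 1) = 0.
  have := congr1 (br A) H1; rewrite (br0r hL) (brDr hL) !(brZr hL) (brxx hL) scaler0 add0r t1.
  by move=> /eqP; rewrite scaler_eq0 (negPf Cnz) orbF => /eqP.
have k0 : kk (inord 0) = 0.
  by move: H1; rewrite k1 scale0r addr0 => /eqP; rewrite scaler_eq0 (negPf Anz) orbF => /eqP.
by move=> i; case: (ord3 i) => ->.
Qed.

Hypothesis HCx : x = l *: C.

Definition fX : 'Hom(V, 'rV[F]_3) := linfun (coordrow X3).
Lemma fXE y : fX y = \row_i coord X3 i y.
Proof. by rewrite lfunE. Qed.
Lemma decomp y :
  y = coord X3 (inord 0) y *: A + coord X3 (inord 1) y *: B + coord X3 (inord 2) y *: C.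
Proof. by rewrite {1}(coord_span (Hspan y)) sum3 nthX0 nthX1 nthX2. Qed.

Lemma fX_comb p0 p1 p2 :
  fX (p0 *: A + p1 *: B + p2 *: C) = p0 *: Ka F + p1 *: Kb F + p2 *: Kc F.
Proof.
rewrite fXE; apply/rowP => j; rewrite !mxE !linearD !linearZ /=.
rewrite -nthX0 -nthX1 -nthX2 !coord_free ?freeX //.
by case: (ord3 j) => ->; rewrite !inord_eq //= ?mulr1n ?mulr0n ?mulr1 ?mulr0 ?addr0 ?add0r.
Qed.



Lemma fX_hom y z : fX (br y z) = K_br (fX y) (fX z).
Proof.
rewrite {1}(decomp y) {1}(decomp z) br_comb_gen // fX_comb.
rewrite /K_br !fXE !mxE.
by rewrite [RHS]addrC [in RHS](addrC (_ *: Kc F)) addrA.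
Qed.

Lemma lkerX : lker fX = 0%VS.
Proof.
apply/eqP/lker0P => u v Huv.
have cuv : forall i, coord X3 i u = coord X3 i v.
  by move=> i; move/rowP/(_ i): Huv; rewrite !fXE !mxE.
by rewrite (decomp u) (decomp v) !cuv.
Qed.

Lemma limgX : limg fX = fullv.
Proof.
apply/eqP; rewrite eqEsubv subvf /=; apply/subvP => r _.
have -> : r = fX (r 0 (inord 0) *: A + r 0 (inord 1) *: B + r 0 (inord 2) *: C).
  rewrite fX_comb; apply/rowP => j; rewrite !mxE.
  case: (ord3 j) => ->; rewrite !inord_eq //= ?mulr1n ?mulr0n ?mulr1 ?mulr0 ?addr0 ?add0r //.
by apply: memv_img; apply: memvf.
Qed.

Lemma imgX : (fX @: <[x]>)%VS = <[Kc F]>%VS.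
Proof.
rewrite limg_line.
have -> : x = 0 *: A + 0 *: B + l *: C by rewrite HCx !scale0r !add0r.
rewrite fX_comb !scale0r !add0r.
apply/eqP; rewrite eqEsubv; apply/andP; split; apply/subvP => v /vlineP [a ->].
  by rewrite scalerA; apply: memvZ; apply: memv_line.
have -> : a *: Kc F = (a / l) *: (l *: Kc F) by rewrite scalerA mulfVK.
by apply: memvZ; apply: memv_line.
Qed.
End Iso.
End Main.

From Stdlib Require Import Classical.
Unset Implicit Arguments.
Set Strict Implicit.

Theorem lemma3p1 (F : fieldType) (V : vectType F) (br : V -> V -> V)
  (hL : is_lie_bracket br) (Q : {vspace V}) :
  is_strong_quasi_ideal br Q ->
  [\/ is_strong_ideal br Q,
      almost_abelian br
    | 2%N \in [pchar F] /\
      exists f : 'Hom(V, 'rV[F]_3),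
        [/\ lker f = 0%VS, limg f = fullv,
            (forall x y : V, f (br x y) = K_br (f x) (f y))
          & (f @: Q)%VS = <[Kc F]>%VS]].
Proof.
move=> [HQs HQq].
case: (classic (is_strong_ideal br Q)) => [HSI|HnSI]; first by apply: Or31.
have [W [HWQ HW1 HWs HWni]] : exists W : {vspace V},
    [/\ (W <= Q)%VS, \dim W = 1%N, is_subalg br W & ~ is_ideal br W].
  apply: NNPP => Hn; apply: HnSI; split => // W HWQ HW1 HWs.
  by apply: NNPP => Hni; apply: Hn; exists W.
set x := vpick W.
have Hx0 : x != 0 by rewrite vpick0 -dimv_eq0 HW1.
have HW : W = <[x]>%VS.
  by apply/eqP; rewrite eq_sym eqEdim -memvE memv_pick dim_vline Hx0 HW1.
have HxQ : x \in Q by apply: (subvP HWQ); apply: memv_pick.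
have Hq : forall y, br x y \in (<[x]> + <[y]>)%VS.
  move=> y; have [_ /(_ <[y]>%VS)] := HQq W HWQ HW1 HWs.
  by rewrite HW => /(lie_brs_subP hL); apply; apply: memv_line.
have [y Hy] : exists y, br x y \notin <[x]>%VS.
  apply: NNPP => Hn; apply: HWni; rewrite /is_ideal HW.
  apply/(lie_brs_subP hL) => u w _ /vlineP [b ->].
  rewrite (brZr hL) (brC hL x u) scalerN memvN; apply: memvZ.
  by apply: NNPP => Hu; apply: Hn; exists u; apply/negP.
have /mem_add_line [p [t Hpt]] := Hq y.
have tnz : t != 0.
  by apply/negP => /eqP t0; move: Hy; rewrite Hpt t0 scale0r addr0 memvZ ?memv_line.
have ynx : y \notin <[x]>%VS.
  apply/negP => /vlineP [a Ha]; move: Hy.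
  by rewrite Ha (brZr hL) (brxx hL) scaler0 mem0v.
have HD := D_all hL Hq (etrans Hpt (addrC _ _)) ynx.
case: (classic (forall h k, Ev br x t h -> Ev br x t k -> br h k = 0)) => [Hab|Hnab].
  by apply: Or32; apply: (case_ab hL Hx0 tnz HD Hab).
have [h [k [Eh Ek Hhk]]] : exists h k, [/\ Ev br x t h, Ev br x t k & br h k != 0].
  apply: NNPP => Hn; apply: Hnab => h k Eh Ek; apply: NNPP => Hne.
  by apply: Hn; exists h, k; split => //; apply/eqP.
have [mu [Hmu Hmu2]] := ev_br hL Hx0 tnz HD Eh Ek.
have munz : mu != 0 by apply/negP => /eqP m0; move: Hhk; rewrite Hmu m0 scale0r eqxx.
apply: Or33; split; first exact: (pchar2 munz Hmu2).
have EA := Ea0 hL mu Eh.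
have Anz := a0nz hL Hx0 tnz Hmu munz.
have Cnz := c0nz Hx0 tnz.
have t1 := tab_ab hL t Hmu munz.
have HCv : forall v, Ev br x t v -> br (c0 x t) v = v := ev_cx hL tnz.
have EB : Ev br x t (b0 k) := Ek.
have Hspan := spanX hL Hx0 tnz HD Eh Ek Hmu munz.
exists (fX (a0 t h mu) (b0 k) (c0 x t)); split.
- exact: lkerX Hspan.
- exact: (limgX hL EA EB Anz Cnz t1 HCv).
- exact: (fX_hom hL EA EB Anz Cnz t1 (tab_ba hL t Hmu munz)
    (tab_ca hL tnz Eh munz Hmu2) (tab_ac hL tnz Eh munz Hmu2)
    (tab_cb hL tnz Ek munz Hmu2) (tab_bc hL tnz Ek munz Hmu2) HCv Hspan).
- rewrite (Q_line hL Hx0 tnz HD Eh Ek Hmu munz HxQ HQs HQq).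
  apply: (imgX hL tnz EA EB Anz Cnz t1 HCv).
  by rewrite /c0 scalerA mulfV // scale1r.
Qed.
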